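(* Let $G$ be a directed multigraph on $[n+1]$ with edges $i\to j$ for $i<j$, and for $i=1,\ldots,n$ let $P_i=\mathcal{F}_G(e_i-e_{n+1})\subset\mathbb{R}^{E(G)}$. Let $G^\star$ be the graph on $\{0,1,\ldots,n+1\}$ obtained from $G$ by adding vertex $0$ and edges $(0,i)$, $i=1,\ldots,n$, and identify $\mathbb{R}^n\times\mathbb{R}^{E(G)}$ with $\mathbb{R}^{E(G^\star)}$ by letting the $i$-th coordinate of $\mathbb{R}^n$ correspond to the edge $(0,i)$. Then the Cayley embedding $\mathcal{C}(P_1,\ldots,P_n)$ equals the flow polytope $\mathcal{F}_{G^\star}(e_0-e_{n+1})$, i.e. the flow polytope of $G^\star$ with netflow $1$ at vertex $0$, $-1$ at vertex $n+1$ and $0$ elsewhere.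
   Context: $\mathcal{F}_H({\bf v})$ is the set of $f\in\mathbb{R}_{\ge0}^{E(H)}$ with outflow minus inflow at each vertex $k$ equal to $v_k$; $e_i-e_{n+1}$ is the netflow $1$ at vertex $i$, $-1$ at $n+1$, $0$ elsewhere. The Cayley embedding of polytopes $P_1,\ldots,P_n\subset\mathbb{R}^N$ is $\mathcal{C}(P_1,\ldots,P_n)=\mathrm{conv}\big(\bigcup_{i=1}^n \{{\sf e}_i\}\times P_i\big)\subset\mathbb{R}^n\times\mathbb{R}^N$, where ${\sf e}_1,\ldots,{\sf e}_n$ is the standard basis of $\mathbb{R}^n$. *)

(* Defs.v *)
From HB Require Import structures.
From mathcomp Require Import all_boot all_order all_algebra.
Set Implicit Arguments. Unset Strict Implicit. Unset Printing Implicit Defensive.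
Import Order.TTheory GRing.Theory Num.Theory.
Local Open Scope ring_scope.

(* A directed multigraph is given by a finite edge type [E] and maps
   [src tgt : E -> nat] (tail and head of each edge); vertices are naturals. *)
Definition flow_polytope (R : realFieldType) (E : finType) (V : pred nat)
  (src tgt : E -> nat) (v : nat -> R) : (E -> R) -> Prop :=
  fun f => (forall e, 0 <= f e) /\
    (forall k, V k ->
       \sum_(e | src e == k) f e - \sum_(e | tgt e == k) f e = v k).

Definition netflow (R : realFieldType) (i j : nat) : nat -> R :=
  fun k => (k == i)%:R - (k == j)%:R.

Definition std_basis (R : realFieldType) (n : nat) (i : 'I_n) : 'I_n -> R :=
  fun j => (j == i)%:R.

(* Cayley embedding C(P_1,...,P_n) = conv (U_i {e_i} x P_i) in R^n x R^E,
   the convex hull given as the set of finite convex combinations. *)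
Definition cayley_embedding (R : realFieldType) (n : nat) (E : finType)
  (P : 'I_n -> (E -> R) -> Prop) : ('I_n -> R) * (E -> R) -> Prop :=
  fun xf => exists (m : nat) (lam : 'I_m -> R) (idx : 'I_m -> 'I_n)
                   (p : 'I_m -> E -> R),
    (forall j, 0 <= lam j) /\ \sum_(j < m) lam j = 1 /\
    (forall j, P (idx j) (p j)) /\
    (forall i, xf.1 i = \sum_(j < m) lam j * std_basis R (idx j) i) /\
    (forall e, xf.2 e = \sum_(j < m) lam j * p j e).

(* G^star: edge type E + 'I_n, edge inr i = (0, i+1). *)
Definition star_src (n : nat) (E : Type) (src : E -> nat) (e : E + 'I_n) : nat :=
  match e with inl e' => src e' | inr _ => 0%N end.
Definition star_tgt (n : nat) (E : Type) (tgt : E -> nat) (e : E + 'I_n) : nat :=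
  match e with inl e' => tgt e' | inr i => (nat_of_ord i).+1 end.

Definition star_coords (R : Type) (n : nat) (E : Type)
  (xf : ('I_n -> R) * (E -> R)) : E + 'I_n -> R :=
  fun e => match e with inl e' => xf.2 e' | inr i => xf.1 i end.

(* Main.v *)
Require Import Defs.
From HB Require Import structures.
From mathcomp Require Import all_boot all_order all_algebra.
From mathcomp Require Import ring lra zify.
Set Implicit Arguments. Unset Strict Implicit. Unset Printing Implicit Defensive.
Import Order.TTheory GRing.Theory Num.Theory.
Local Open Scope ring_scope.

Section Aux.
Variables (R : realFieldType) (n : nat) (E : finType) (src tgt : E -> nat).
Hypothesis Hsrc : forall e, (1 <= src e)%N.
Hypothesis Hlt : forall e, (src e < tgt e)%N.
Hypothesis Htgt : forall e, (tgt e <= n.+1)%N.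

Definition phi (e : E) (u : nat) : R := (src e == u)%:R - (tgt e == u)%:R.
Definition nf (h : E -> R) (u : nat) : R := \sum_e h e * phi e u.
Definition nfi (i : 'I_n) (u : nat) : R := netflow R i.+1 n.+1 u.

Lemma b2r_mul (b : bool) (x : R) : x * b%:R = if b then x else 0.
Proof. by case: b; rewrite ?mulr1 ?mulr0. Qed.

Lemma nfE h u : \sum_(e | src e == u) h e - \sum_(e | tgt e == u) h e = nf h u.
Proof.
rewrite /nf (big_mkcond (fun e => src e == u)) (big_mkcond (fun e => tgt e == u)) -sumrB.
by apply: eq_bigr => e _; rewrite /phi mulrBr !b2r_mul.
Qed.

Lemma nf_ext h1 h2 u : (forall e, h1 e = h2 e) -> nf h1 u = nf h2 u.
Proof. by move=> H; apply: eq_bigr => e _; rewrite H. Qed.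

Lemma nf_lin (I : finType) (c : I -> R) (h : I -> E -> R) u :
  nf (fun e => \sum_i c i * h i e) u = \sum_i c i * nf (h i) u.
Proof.
rewrite /nf; under eq_bigr do rewrite mulr_suml.
rewrite exchange_big; apply: eq_bigr => i _; rewrite mulr_sumr.
by apply: eq_bigr => e _; rewrite mulrA.
Qed.

Lemma nf0 h : nf h 0 = 0.
Proof.
rewrite /nf big1 // => e _; rewrite /phi.
have := Hsrc e; have := Hlt e => h1 h2.
have -> : (src e == 0%N) = false by apply/negbTE; lia.
have -> : (tgt e == 0%N) = false by apply/negbTE; lia.
by rewrite subrr mulr0.
Qed.

Lemma sum_delta (F : 'I_n -> R) j : \sum_i (i == j)%:R * F i = F j.
Proof.
rewrite (bigD1 j) //= eqxx mul1r big1 ?addr0 // => i /negbTE ->; by rewrite mul0r.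
Qed.

Lemma sum_nfi_at (x : 'I_n -> R) (i : 'I_n) : \sum_j x j * nfi j i.+1 = x i.
Proof.
rewrite -[RHS](sum_delta x); apply: eq_bigr => j _.
rewrite /nfi /netflow eqSS.
have -> : (i.+1 == n.+1) = false by rewrite eqSS; apply/negbTE; rewrite neq_ltn ltn_ord.
by rewrite subr0 mulrC eq_sym.
Qed.

Lemma sum_nfiE (x : 'I_n -> R) u : \sum_j x j * nfi j u =
  \sum_j x j * (j.+1 == u)%:R - (\sum_j x j) * (u == n.+1)%:R.
Proof.
rewrite mulr_suml -sumrB; apply: eq_bigr => j _; by rewrite /nfi /netflow mulrBr eq_sym.
Qed.

Lemma QE t u : (1 <= t <= n.+1)%N ->
  \sum_(i < n) (t == i.+1)%:R * nfi i u = (t == u)%:R - (u == n.+1)%:R.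
Proof.
move=> /andP [t1 tn].
case: (ltnP t n.+1) => Ht.
- case: t t1 tn Ht => [|j] // _ _ Ht.
  have Hj : (j < n)%N by lia.
  rewrite (bigD1 (Ordinal Hj)) //= big1.
  + by rewrite eqxx mul1r addr0 /nfi /netflow /= eq_sym.
  + move=> i Hi; have -> : (j.+1 == i.+1) = false.
      apply/negbTE; apply: contra Hi => /eqP [Hji]; apply/eqP; apply: val_inj => /=; lia.
    by rewrite mul0r.
- have -> : t = n.+1 by lia.
  rewrite big1; first by rewrite [u == _]eq_sym subrr.
  move=> i _; have -> : (n.+1 == i.+1) = false by apply/negbTE; rewrite eqSS neq_ltn ltn_ord orbT.
  by rewrite mul0r.
Qed.


Definition claimP k := forall (g : E -> R) (x : 'I_n -> R),
  (forall e, 0 <= g e) -> (forall e, (src e <= k)%N -> g e = 0) ->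
  (forall i, 0 <= x i) ->
  (forall u, (1 <= u <= n.+1)%N -> nf g u = \sum_i x i * nfi i u) ->
  exists p : 'I_n -> E -> R,
    (forall i, 0 < x i -> (forall e, 0 <= p i e) /\
        (forall u, (1 <= u <= n.+1)%N -> nf (p i) u = nfi i u)) /\
    (forall e, g e = \sum_i x i * p i e).

Lemma claim_base : claimP n.+1.
Proof.
move=> g x g0 gk x0 Hg.
have gz : forall e, g e = 0 by move=> e; apply: gk; have := Hlt e; have := Htgt e; lia.
exists (fun _ _ => 0); split; last by move=> e; rewrite gz big1 // => i _; rewrite mulr0.
move=> i Hi; exfalso.
have := Hg i.+1; rewrite sum_nfi_at.
have -> : nf g i.+1 = 0 by rewrite /nf big1 // => e _; rewrite gz mul0r.
have Hu : (1 <= i.+1 <= n.+1)%N by have := ltn_ord i; lia.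
move=> /(_ Hu) H; by rewrite -H ltxx in Hi.
Qed.

Lemma claim_step k : (k < n)%N -> claimP k.+1 -> claimP k.
Proof.
move=> Hk IH g x g0 gk x0 Hg.
pose iv : 'I_n := Ordinal Hk.
pose w e := (src e == k.+1)%:R * g e.
pose a := \sum_e w e.
pose c (j : 'I_n) := \sum_f w f * (tgt f == j.+1)%:R.
pose Q f u := \sum_(j < n) (tgt f == j.+1)%:R * nfi j u.
pose W u := \sum_f w f * Q f u.
pose g' e := g e - w e.
pose x' j := (j != iv)%:R * x j + c j.
have w0 : forall e, 0 <= w e by move=> e; apply: mulr_ge0 => //; apply: ler0n.
have c0 : forall j, 0 <= c j.
  by move=> j; apply: sumr_ge0 => f _; apply: mulr_ge0 => //; apply: ler0n.
have Ha : a = x iv.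
  have Hs := sum_nfi_at x iv; simpl in Hs.
  have Hu : (1 <= k.+1 <= n.+1)%N by lia.
  rewrite -Hs -(Hg _ Hu) /nf /a; apply: eq_bigr => e _; rewrite /w /phi.
  case: (eqVneq (tgt e) k.+1) => Ht.
  - have Hs0 : (src e <= k)%N by have := Hlt e; lia.
    by rewrite gk // mul0r mulr0.
  - by rewrite subr0 mulrC.
have K1 : forall u, \sum_e w e * phi e u = a * nfi iv u - W u.
  move=> u; rewrite /W /a mulr_suml -sumrB; apply: eq_bigr => e _; rewrite /w.
  case: (eqVneq (src e) k.+1) => Hs.
  - rewrite -mulrBr; congr (_ * _); rewrite /Q QE; last first.
      by have := Hsrc e; have := Hlt e; have := Htgt e; lia.
    rewrite /phi /nfi /netflow Hs /= [k.+1 == u]eq_sym; ring.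
  - by rewrite !mul0r subrr.
have K2 : forall u, \sum_j c j * nfi j u = W u.
  move=> u; rewrite /c /W; under eq_bigr do rewrite mulr_suml.
  rewrite exchange_big; apply: eq_bigr => f _; rewrite /Q mulr_sumr.
  by apply: eq_bigr => j _; rewrite mulrA.
have g'0 : forall e, 0 <= g' e.
  move=> e; rewrite /g' /w; case: (src e == k.+1); first by rewrite mul1r subrr.
  by rewrite mul0r subr0.
have g'k : forall e, (src e <= k.+1)%N -> g' e = 0.
  move=> e He; rewrite /g' /w; case: (eqVneq (src e) k.+1) => Hs.
  - by rewrite mul1r subrr.
  - by rewrite mul0r subr0 gk //; lia.
have x'0 : forall j, 0 <= x' j.
  by move=> j; apply: addr_ge0 => //; apply: mulr_ge0 => //; apply: ler0n.
have Hg' : forall u, (1 <= u <= n.+1)%N -> nf g' u = \sum_j x' j * nfi j u.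
  move=> u Hu.
  have -> : nf g' u = nf g u - \sum_e w e * phi e u.
    by rewrite /nf -sumrB; apply: eq_bigr => e _; rewrite /g' mulrBl.
  rewrite /x' /= (eq_bigr (fun j => (j != iv)%:R * x j * nfi j u + c j * nfi j u));
    last by move=> j _; rewrite mulrDl.
  rewrite big_split /= K1 K2 (Hg _ Hu).
  rewrite (bigD1 iv) //= [X in _ = X + _](bigD1 iv) //= eqxx /= !mul0r add0r Ha.
  have -> : \sum_(j < n | j != iv) (j != iv)%:R * x j * nfi j u =
            \sum_(j < n | j != iv) x j * nfi j u.
    by apply: eq_bigr => j Hj; rewrite Hj mul1r.
  ring.
have [p' [Hp'1 Hp'2]] := IH g' x' g'0 g'k x'0 Hg'.
have cpos : forall j, 0 < c j -> 0 < x' j.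
  move=> j Hc; apply: (lt_le_trans Hc); rewrite /x' lerDr.
  by apply: mulr_ge0 => //; apply: ler0n.
have cp0 : forall j e, 0 <= c j * p' j e.
  move=> j e; case: (eqVneq (c j) 0) => Hc; first by rewrite Hc mul0r.
  have Hc' : 0 < c j by rewrite lt_def Hc c0.
  by apply: mulr_ge0 => //; apply: (Hp'1 j (cpos j Hc')).1.
have cnf : forall j u, (1 <= u <= n.+1)%N -> c j * nf (p' j) u = c j * nfi j u.
  move=> j u Hu; case: (eqVneq (c j) 0) => Hc; first by rewrite Hc !mul0r.
  have Hc' : 0 < c j by rewrite lt_def Hc c0.
  by rewrite ((Hp'1 j (cpos j Hc')).2 u Hu).
pose p i := if i == iv then (fun e => a^-1 * (w e + \sum_j c j * p' j e)) else p' i.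
exists p; split.
- move=> i Hi; case: (eqVneq i iv) => Hiv.
  + subst i; rewrite /p eqxx; have apos : 0 < a by rewrite Ha.
    split.
    * move=> e; apply: mulr_ge0; first by rewrite invr_ge0 ltW.
      by apply: addr_ge0 => //; apply: sumr_ge0 => j _.
    * move=> u Hu.
      have -> : nf (fun e => a^-1 * (w e + \sum_j c j * p' j e)) u =
          a^-1 * nf w u + a^-1 * nf (fun e => \sum_j c j * p' j e) u.
        by rewrite /nf !mulr_sumr -big_split; apply: eq_bigr => e _ /=; ring.
      rewrite nf_lin; under eq_bigr do rewrite (cnf _ _ Hu).
      rewrite /nf K1 K2 -mulrDr subrK mulrA mulVf ?mul1r //.
      by rewrite gt_eqF.
  + rewrite /p (negbTE Hiv); apply: Hp'1.
    apply: (lt_le_trans Hi); rewrite /x' Hiv mul1r lerDl //.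
- move=> e; rewrite (bigD1 iv) //= /p eqxx.
  have -> : \sum_(j < n | j != iv) x j * (if j == iv then
        (fun e0 => a^-1 * (w e0 + \sum_j0 c j0 * p' j0 e0)) else p' j) e =
      \sum_(j < n | j != iv) x j * p' j e.
    by apply: eq_bigr => j Hj; rewrite (negbTE Hj).
  have Hge : g e = w e + g' e by rewrite /g'; ring.
  have Hg'e : g' e = \sum_(j < n | j != iv) x j * p' j e + \sum_j c j * p' j e.
    rewrite Hp'2 /x' /=; under eq_bigr do rewrite mulrDl; rewrite big_split /=.
    rewrite (bigD1 iv) //= eqxx /= !mul0r add0r; congr (_ + _).
    by apply: eq_bigr => j Hj; rewrite Hj mul1r.
  have HK : x iv * (a^-1 * (w e + \sum_j c j * p' j e)) = w e + \sum_j c j * p' j e.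
    case: (eqVneq a 0) => Ha0.
    + have wz : forall f, w f = 0.
        by move=> f; apply: (psumr_eq0P (P := predT) (fun f _ => w0 f) Ha0).
      have cz : forall j, c j = 0.
        by move=> j; rewrite /c big1 // => f _; rewrite wz mul0r.
      rewrite wz big1 ?addr0 ?mulr0 // => j _; by rewrite cz mul0r.
    + by rewrite -Ha mulrA mulfV ?mul1r.
  rewrite HK Hge Hg'e; ring.
Qed.

Lemma claim0 : claimP 0.
Proof.
suff H : forall d k, (k + d = n.+1)%N -> claimP k by apply: (H n.+1 0).
elim=> [|d IHd] k Hkd; first by rewrite addn0 in Hkd; rewrite Hkd; apply: claim_base.
have IHk : claimP k.+1 by apply: IHd; lia.
case: (ltnP k n) => Hk; first by apply: claim_step.
move=> g x g0 gk x0 Hg; apply: IHk => // e _; apply: gk.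
by have := Hlt e; have := Htgt e; lia.
Qed.


Lemma starE (xf : ('I_n -> R) * (E -> R)) u :
  \sum_(e | star_src src e == u) star_coords xf e -
  \sum_(e | star_tgt tgt e == u) star_coords xf e
  = nf xf.2 u + (0 == u)%:R * \sum_i xf.1 i - \sum_i xf.1 i * (i.+1 == u)%:R.
Proof.
rewrite !big_sumType /= -nfE.
have HB : \sum_(i < n | 0 == u) xf.1 i = (0 == u)%:R * \sum_i xf.1 i.
  by rewrite big_mkcond mulr_sumr; apply: eq_bigr => i _; rewrite mulrC b2r_mul.
have HD : \sum_(i < n | i.+1 == u) xf.1 i = \sum_i xf.1 i * (i.+1 == u)%:R.
  by rewrite big_mkcond; apply: eq_bigr => i _; rewrite b2r_mul.
rewrite HB HD; ring.
Qed.

Lemma fwd xf :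
  cayley_embedding
      (fun i : 'I_n => flow_polytope (fun k => (1 <= k <= n.+1)%N) src tgt
                         (netflow R (nat_of_ord i).+1 n.+1)) xf ->
  flow_polytope (fun k => (k <= n.+1)%N) (star_src src) (star_tgt tgt)
      (netflow R 0 n.+1) (star_coords xf).
Proof.
case=> m [lam [idx [p [l0 [l1 [Pp [H1 H2]]]]]]].
have Hx : forall i, xf.1 i = \sum_j lam j * (i == idx j)%:R by move=> i; rewrite H1.
split.
- case=> [e|i] /=.
  + rewrite H2; apply: sumr_ge0 => j _; apply: mulr_ge0 => //; exact: (Pp j).1.
  + rewrite Hx; apply: sumr_ge0 => j _; apply: mulr_ge0 => //; exact: ler0n.
- move=> u Hu; rewrite starE.
  have sumx : \sum_i xf.1 i = 1.
    under eq_bigr do rewrite Hx.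
    rewrite exchange_big -[RHS]l1; apply: eq_bigr => j _; rewrite -mulr_sumr.
    have -> : \sum_(i < n) (i == idx j)%:R = 1 :> R.
      rewrite -[RHS](sum_delta (fun _ => 1) (idx j)); apply: eq_bigr => i _; by rewrite mulr1.
    by rewrite mulr1.
  have sumxu : \sum_i xf.1 i * (i.+1 == u)%:R = \sum_j lam j * (u == (idx j).+1)%:R.
    under eq_bigr do rewrite Hx mulr_suml.
    rewrite exchange_big; apply: eq_bigr => j _.
    rewrite eq_sym -(sum_delta (fun i => lam j * (i.+1 == u)%:R) (idx j)).
    by apply: eq_bigr => i _; ring.
  have -> : nf xf.2 u = nf (fun e => \sum_j lam j * p j e) u by apply: nf_ext.
  rewrite nf_lin sumx sumxu.
  case: u Hu sumxu => [|u] Hu sumxu.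
  + rewrite big1; last by move=> j _; rewrite nf0 mulr0.
    rewrite [X in _ - X]big1; last by move=> j _; rewrite mulr0.
    rewrite /netflow /=; ring.
  + have Hu' : (1 <= u.+1 <= n.+1)%N by lia.
    have -> : \sum_j lam j * nf (p j) u.+1 =
              \sum_j lam j * (netflow R (idx j).+1 n.+1 u.+1).
      by apply: eq_bigr => j _; rewrite -nfE (Pp j).2.
    rewrite /netflow; under eq_bigr do rewrite mulrBr.
    rewrite sumrB -mulr_suml l1 /=; ring.
Qed.

Lemma bwd xf :
  flow_polytope (fun k => (k <= n.+1)%N) (star_src src) (star_tgt tgt)
      (netflow R 0 n.+1) (star_coords xf) ->
  cayley_embedding
      (fun i : 'I_n => flow_polytope (fun k => (1 <= k <= n.+1)%N) src tgt
                         (netflow R (nat_of_ord i).+1 n.+1)) xf.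
Proof.
case=> Hnn Hc.
have x0 : forall i, 0 <= xf.1 i by move=> i; exact: (Hnn (inr i)).
have g0 : forall e, 0 <= xf.2 e by move=> e; exact: (Hnn (inl e)).
have sumx : \sum_i xf.1 i = 1.
  have := Hc 0%N isT; rewrite starE nf0 [X in _ - X]big1; last by move=> i _; rewrite mulr0.
  rewrite /netflow /= => H; lra.
have Hg : forall u, (1 <= u <= n.+1)%N -> nf xf.2 u = \sum_i xf.1 i * nfi i u.
  move=> u Hu; have := Hc u (ltac:(lia)); rewrite starE sum_nfiE sumx /netflow.
  have -> : (0 == u) = false by apply/negbTE; lia.
  have -> : (u == 0%N) = false by apply/negbTE; lia.
  move=> H; lra.
have gk : forall e, (src e <= 0)%N -> xf.2 e = 0 by move=> e; have := Hsrc e; lia.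
have [p [Hp1 Hp2]] := claim0 g0 gk x0 Hg.
have xz : forall j, ~~ (0 < xf.1 j) -> xf.1 j = 0.
  by move=> j Hj; apply/eqP; rewrite eq_le x0 andbT leNgt.
case: (pickP (fun i => 0 < xf.1 i)) => [i0 Hi0 | Hn]; last first.
  exfalso; have : \sum_i xf.1 i = 0 by apply: big1 => i _; apply: xz; rewrite Hn.
  by rewrite sumx => /eqP; rewrite oner_eq0.
exists n, xf.1, (fun j => if 0 < xf.1 j then j else i0),
  (fun j => p (if 0 < xf.1 j then j else i0)).
split; first by [].
split; first by [].
split.
- move=> j /=; case: ifP => Hj.
  + split; first exact: (Hp1 j Hj).1.
    by move=> k Hk; rewrite nfE; apply: (Hp1 j Hj).2.
  + split; first exact: (Hp1 i0 Hi0).1.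
    by move=> k Hk; rewrite nfE; apply: (Hp1 i0 Hi0).2.
split.
- move=> i /=; rewrite -(sum_delta xf.1 i); apply: eq_bigr => j _; rewrite /std_basis.
  case: ifP => Hj; first by rewrite mulrC eq_sym.
  by rewrite xz ?Hj // mul0r mulr0.
- move=> e /=; rewrite Hp2; apply: eq_bigr => j _; case: ifP => // Hj.
  by rewrite xz ?Hj // !mul0r.
Qed.

End Aux.

Theorem proposition7p2 (R : realFieldType) (n : nat) (E : finType)
  (src tgt : E -> nat)
  (Hsrc : forall e, (1 <= src e)%N)
  (Hlt : forall e, (src e < tgt e)%N)
  (Htgt : forall e, (tgt e <= n.+1)%N) :
  forall xf : ('I_n -> R) * (E -> R),
    cayley_embedding
      (fun i : 'I_n => flow_polytope (fun k => (1 <= k <= n.+1)%N) src tgt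
                         (netflow R (nat_of_ord i).+1 n.+1)) xf
    <->
    flow_polytope (fun k => (k <= n.+1)%N) (star_src src) (star_tgt tgt)
      (netflow R 0 n.+1) (star_coords xf).
Proof.
move=> xf; split; [exact: fwd | exact: bwd].
Qed.
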